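(* For every infinite group $G$, $FT_G\subsetneq Sp_G$; consequently $\overline{G^*G^*}\subsetneq FT_G^{\wedge}$.
   Context: A subset $A$ of $G$ is $n$-thin ($n\in\mathbb{N}$) if for all distinct $g_0,\dots,g_n\in G$ the set $g_0A\cap\dots\cap g_nA$ is finite; finitely thin if it is $n$-thin for some $n$. $FT_G$ is the family of finitely thin subsets. $A$ is sparse if for every infinite $X\subseteq G$ there is finite $F\subseteq X$ with $\bigcap_{g\in F}gA$ finite; $Sp_G$ is the family of sparse subsets. $\beta G$ is the semigroup of ultrafilters on $G$ (with the standard extension of multiplication), $G^*$ the free ultrafilters, $\overline{G^*G^*}$ the closure of $\{pq:p,q\in G^*\}$. For an ideal $\mathcal{I}$ of subsets of $G$, $\mathcal{I}^{\wedge}=\{p\in\beta G: G\setminus A\in p$ for each $A\in\mathcal{I}\}$. *)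

(* Defs.v *)
From Stdlib Require Import List.
Import ListNotations.
Set Implicit Arguments.

Record Group := {
  carrier :> Type;
  gmul : carrier -> carrier -> carrier;
  gone : carrier;
  ginv : carrier -> carrier;
  gmul_assoc : forall x y z, gmul x (gmul y z) = gmul (gmul x y) z;
  gmul_1l : forall x, gmul gone x = x;
  gmul_1r : forall x, gmul x gone = x;
  gmul_Vl : forall x, gmul (ginv x) x = gone;
  gmul_Vr : forall x, gmul x (ginv x) = gone
}.

Section Defs.
Variable G : Group.

Definition finite_set (A : G -> Prop) : Prop :=
  exists l : list G, forall x, A x -> In x l.

Definition infinite_group : Prop := ~ finite_set (fun _ => True).

Definition translate (g : G) (A : G -> Prop) : G -> Prop :=
  fun x => A (gmul G (ginv G g) x).

Definition inter_translates (F : list G) (A : G -> Prop) : G -> Prop :=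
  fun x => forall g, In g F -> translate g A x.

Definition n_thin (n : nat) (A : G -> Prop) : Prop :=
  forall F : list G, NoDup F -> length F = S n ->
    finite_set (inter_translates F A).

Definition finitely_thin (A : G -> Prop) : Prop := exists n, n_thin n A.

Definition sparse (A : G -> Prop) : Prop :=
  forall X : G -> Prop, ~ finite_set X ->
    exists F : list G, (forall g, In g F -> X g) /\
      finite_set (inter_translates F A).

Definition ultrafilter (p : (G -> Prop) -> Prop) : Prop :=
  p (fun _ => True) /\
  ~ p (fun _ => False) /\
  (forall A B, p A -> p B -> p (fun x => A x /\ B x)) /\
  (forall A B, p A -> (forall x, A x -> B x) -> p B) /\
  (forall A, p A \/ p (fun x => ~ A x)).

Definition free_uf (p : (G -> Prop) -> Prop) : Prop :=
  ultrafilter p /\ forall A, finite_set A -> ~ p A.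

Definition uf_mul (p q : (G -> Prop) -> Prop) : (G -> Prop) -> Prop :=
  fun A => p (fun x => q (fun y => A (gmul G x y))).

(* closure of G*G* in βG (basic open sets {p : A ∈ p}) *)
Definition in_closure_GstarGstar (p : (G -> Prop) -> Prop) : Prop :=
  ultrafilter p /\
  forall A, p A -> exists q r, free_uf q /\ free_uf r /\ uf_mul q r A.

Definition FT_wedge (p : (G -> Prop) -> Prop) : Prop :=
  ultrafilter p /\ forall A, finitely_thin A -> p (fun x => ~ A x).

End Defs.

(* Main.v *)
Require Import Defs.
From Stdlib Require Import List Arith Lia Classical ClassicalEpsilon.
From mathcomp Require classical_sets boolp filter.
Import ListNotations.

Module UFM.
Import mathcomp.boot.ssreflect mathcomp.boot.ssrfun mathcomp.boot.ssrbool
  mathcomp.classical.classical_sets mathcomp.classical.boolp mathcomp.classical.filter.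
Lemma uf_exists T (F : (T->Prop)->Prop) :
  F (fun _ => True) -> ~F (fun _ => False) ->
  (forall A B, F A -> F B -> F (fun x => A x /\ B x)) ->
  (forall A B, F A -> (forall x, A x -> B x) -> F B) ->
  exists p : (T -> Prop) -> Prop,
   (p (fun _ => True) /\ ~ p (fun _ => False) /\
   (forall A B, p A -> p B -> p (fun x => A x /\ B x)) /\
   (forall A B, p A -> (forall x, A x -> B x) -> p B) /\
   (forall A, p A \/ p (fun x => ~ A x))) /\ (forall A, F A -> p A).
Proof.
move=> FT F0 FI FS.
have PF : ProperFilter F.
  apply: Build_ProperFilter => //. split => //.
  move=> A B /FS; apply.
have [p [Up sFp]] := ultraFilterLemma PF.
exists p; split => //.
have pF : ProperFilter p := ultra_proper.
split; first exact: (@filterT _ p).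
split; first exact: (@filter_not_empty _ p).
split; first by move=> A B pA pB; exact: (@filterI _ p _ A B).
split; first by move=> A B pA AB; exact: (@filterS _ p _ A B AB).
move=> A; exact: (in_ultra_setVsetC A Up).
Qed.
End UFM.

Set Bullet Behavior "Strict Subproofs".

Section Main.
Variable G : Group.
Local Notation "x ⋅ y" := (gmul G x y) (at level 40, left associativity).
Local Notation inv := (ginv G).
Local Notation e1 := (gone G).
Local Notation fin := (finite_set G).

Lemma mulA (x y z : G) : x ⋅ (y ⋅ z) = x ⋅ y ⋅ z.
Proof. apply gmul_assoc. Qed.
Lemma mulKl (x y : G) : inv x ⋅ (x ⋅ y) = y.
Proof. rewrite mulA, gmul_Vl, gmul_1l. reflexivity. Qed.
Lemma mulKl' (x y : G) : x ⋅ (inv x ⋅ y) = y.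
Proof. rewrite mulA, gmul_Vr, gmul_1l. reflexivity. Qed.
Lemma mulKr (x y : G) : (y ⋅ x) ⋅ inv x = y.
Proof. rewrite <- mulA, gmul_Vr, gmul_1r. reflexivity. Qed.
Lemma mulKr' (x y : G) : (y ⋅ inv x) ⋅ x = y.
Proof. rewrite <- mulA, gmul_Vl, gmul_1r. reflexivity. Qed.
Lemma inv_uniq (x y : G) : x ⋅ y = e1 -> y = inv x.
Proof. intro H. rewrite <- (mulKl x y), H, gmul_1r. reflexivity. Qed.
Lemma inv_inv (x : G) : inv (inv x) = x.
Proof. symmetry. apply inv_uniq. apply gmul_Vl. Qed.
Lemma inv_mul (x y : G) : inv (x ⋅ y) = inv y ⋅ inv x.
Proof. symmetry. apply inv_uniq. rewrite <- mulA, mulKl'. apply gmul_Vr. Qed.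
Lemma inv_inj (x y : G) : inv x = inv y -> x = y.
Proof. intro H. rewrite <- (inv_inv x), H, inv_inv. reflexivity. Qed.
Lemma mul_cancel_r (x y z : G) : y ⋅ x = z ⋅ x -> y = z.
Proof. intro H. rewrite <- (mulKr x y), H, mulKr. reflexivity. Qed.
Lemma mid (a b g : G) : (a ⋅ b) ⋅ (inv b ⋅ g) = a ⋅ g.
Proof. rewrite <- mulA, mulKl'. reflexivity. Qed.
Lemma mid2 (a b y : G) : (a ⋅ y) ⋅ inv (b ⋅ y) = a ⋅ inv b.
Proof. rewrite inv_mul, mid. reflexivity. Qed.

Lemma fin_sub (A B : G -> Prop) : fin B -> (forall x, A x -> B x) -> fin A.
Proof. intros [l Hl] H. exists l. auto. Qed.
Lemma fin_union (A B : G -> Prop) : fin A -> fin B -> fin (fun z => A z \/ B z).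
Proof.
  intros [l1 H1] [l2 H2]. exists (l1 ++ l2). intros x [Hx|Hx]; apply in_or_app; auto.
Qed.
Lemma fin_map {T} (L : list T) (f : T -> G) : fin (fun z => exists s, In s L /\ z = f s).
Proof.
  exists (map f L). intros z [s [Hs ->]]. apply in_map; auto.
Qed.
Lemma fin_flat {T} (L : list T) (P : T -> G -> Prop) :
  (forall t, In t L -> fin (P t)) -> fin (fun z => exists t, In t L /\ P t z).
Proof.
  induction L as [|a L IH]; intros H.
  - exists []. intros z [t [[] _]].
  - apply fin_sub with (fun z => P a z \/ exists t, In t L /\ P t z).
    + apply fin_union; [apply H; left; auto | apply IH; intros; apply H; right; auto].
    + intros z [t [[<-|Ht] Hz]]; [left; auto | right; eauto].
Qed.

Lemma inf_nodup (X : G -> Prop) : ~ fin X -> forall n, exists l, NoDup l /\ length l = n /\ forall x, In x l -> X x.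
Proof.
  intros HX n. induction n as [|n IH].
  - exists []. repeat split; [constructor | intros x []].
  - destruct IH as [l [Hn [Hl Hx]]].
    assert (Hex : exists x, X x /\ ~ In x l).
    { apply NNPP; intro H. apply HX. exists l. intros x Hx'. apply NNPP; intro H'.
      apply H; eauto. }
    destruct Hex as [x [Hx1 Hx2]]. exists (x :: l). repeat split.
    + constructor; auto.
    + simpl; lia.
    + intros y [<-|Hy]; auto.
Qed.

Lemma nodup_inf (X : G -> Prop) : (forall n, exists l, NoDup l /\ length l = n /\ forall x, In x l -> X x) -> ~ fin X.
Proof.
  intros H [L HL]. destruct (H (S (length L))) as [l [Hn [Hl Hx]]].
  assert (Hi : incl l L) by (intros y Hy; apply HL, Hx, Hy).
  pose proof (NoDup_incl_length Hn Hi). lia.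
Qed.

Lemma nodup_map_inj {A B} (f : A -> B) (l : list A) : (forall x y, f x = f y -> x = y) -> NoDup l -> NoDup (map f l).
Proof.
  intros Hf Hl. induction Hl as [|a l Ha Hl IH]; simpl; constructor; auto.
  intro Hin. apply in_map_iff in Hin. destruct Hin as [y [Hy Hy']].
  apply Hf in Hy. subst. auto.
Qed.

Lemma in_firstn {A} n (l : list A) x : In x (firstn n l) -> In x l.
Proof. intro H. rewrite <- (firstn_skipn n l). apply in_or_app. left; auto. Qed.

Lemma nodup_firstn {A} n (l : list A) : NoDup l -> NoDup (firstn n l).
Proof.
  revert l. induction n as [|n IH]; intros l H; simpl; [constructor|].
  destruct l as [|a l]; [constructor|]. inversion H; subst. constructor.
  - intro Hin. apply in_firstn in Hin. auto.
  - auto.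
Qed.

Lemma thin_ge n (B : G -> Prop) F : n_thin G n B -> NoDup F -> S n <= length F -> fin (inter_translates G F B).
Proof.
  intros Hn HF Hl. apply fin_sub with (inter_translates G (firstn (S n) F) B).
  - apply Hn; [apply nodup_firstn; auto | apply firstn_length_le; auto].
  - intros z Hz g Hg. apply Hz. eapply in_firstn; eauto.
Qed.

Lemma thin_mono n (A B : G -> Prop) : n_thin G n B -> (forall x, A x -> B x) -> n_thin G n A.
Proof.
  intros Hn H F HF Hl. apply fin_sub with (inter_translates G F B); [apply Hn; auto|].
  intros z Hz g Hg. apply H. apply Hz; auto.
Qed.

Lemma union_aux n m (B1 B2 : G -> Prop) (H1 : n_thin G n B1) (H2 : n_thin G m B2) :
  forall R F1 F2, NoDup F1 -> NoDup F2 -> NoDup R ->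
  (forall g, In g R -> ~ In g F1 /\ ~ In g F2) ->
  S (S (n + m)) <= length F1 + length F2 + length R ->
  fin (fun z => inter_translates G F1 B1 z /\ inter_translates G F2 B2 z /\
                inter_translates G R (fun y => B1 y \/ B2 y) z).
Proof.
  induction R as [|g R IH]; intros F1 F2 HF1 HF2 HR Hd Hl.
  - simpl in Hl. destruct (le_lt_dec (S n) (length F1)) as [Hc|Hc].
    + apply fin_sub with (inter_translates G F1 B1); [apply thin_ge with n; auto|].
      intros z [Hz _]; exact Hz.
    + apply fin_sub with (inter_translates G F2 B2); [apply thin_ge with m; auto; lia|].
      intros z [_ [Hz _]]; exact Hz.
  - inversion HR as [|? ? HgR HR']; subst.
    destruct (Hd g (or_introl eq_refl)) as [Hg1 Hg2].
    apply fin_sub with (fun z =>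
      (inter_translates G (g :: F1) B1 z /\ inter_translates G F2 B2 z /\
                inter_translates G R (fun y => B1 y \/ B2 y) z) \/
      (inter_translates G F1 B1 z /\ inter_translates G (g :: F2) B2 z /\
                inter_translates G R (fun y => B1 y \/ B2 y) z)).
    + assert (HdR : forall h, In h R -> h <> g /\ ~ In h F1 /\ ~ In h F2).
      { intros h Hh. destruct (Hd h (or_intror Hh)) as [Ha Hb]. split; auto.
        intro; subst; auto. }
      apply fin_union; apply IH; auto.
      * constructor; auto.
      * intros h Hh. destruct (HdR h Hh) as (Ha & Hb & Hc). split; auto.
        intros [Heq|Hin]; auto.
      * simpl in *; lia.
      * constructor; auto.
      * intros h Hh. destruct (HdR h Hh) as (Ha & Hb & Hc). split; auto.
        intros [Heq|Hin]; auto.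
      * simpl in *; lia.
    + intros z [Hz1 [Hz2 HzR]].
      assert (HzRg : translate G g (fun y => B1 y \/ B2 y) z) by (apply HzR; left; auto).
      unfold translate in HzRg. destruct HzRg as [Hb|Hb]; [left|right]; repeat split; auto;
        try (intros h [<-|Hh]; auto);
        intros h Hh; apply HzR; right; auto.
Qed.

Lemma FT_union (B1 B2 : G -> Prop) : finitely_thin G B1 -> finitely_thin G B2 ->
  finitely_thin G (fun y => B1 y \/ B2 y).
Proof.
  intros [n Hn] [m Hm]. exists (S (n + m)). intros F HF Hl.
  apply fin_sub with (fun z => inter_translates G [] B1 z /\ inter_translates G [] B2 z /\
                inter_translates G F (fun y => B1 y \/ B2 y) z).
  - apply (union_aux n m B1 B2 Hn Hm); auto; try constructor; simpl; try lia;
    intros; split; auto.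
  - intros z Hz. repeat split; auto; intros g [].
Qed.

Lemma FT_false : finitely_thin G (fun _ => False).
Proof.
  exists 0. intros F HF Hl. exists []. intros z Hz. destruct F as [|g F]; [discriminate|].
  exact (Hz g (or_introl eq_refl)).
Qed.

Lemma uf_list (r : (G -> Prop) -> Prop) (Hr : ultrafilter G r) (P : G -> G -> Prop) F :
  (forall g, In g F -> r (P g)) -> r (fun z => forall g, In g F -> P g z).
Proof.
  destruct Hr as (HT & HF & HI & HS & HU). induction F as [|a F IH]; intros H.
  - apply HS with (fun _ => True); auto. intros z _ g [].
  - apply HS with (fun z => P a z /\ (forall g, In g F -> P g z)).
    + apply HI; [apply H; left; auto | apply IH; intros; apply H; right; auto].
    + intros z [Ha Hr'] g [<-|Hg]; auto.
Qed.

Lemma part1 (A : G -> Prop) : finitely_thin G A -> sparse G A.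
Proof.
  intros [n Hn] X HX. destruct (inf_nodup X HX (S n)) as [F [Hnd [Hl Hin]]].
  exists F. split; auto.
Qed.

Lemma part3 p : in_closure_GstarGstar G p -> FT_wedge G p.
Proof.
  intros [Hp Hcl]. split; [exact Hp|]. intros B [n Hn].
  destruct Hp as (HT & HF & HI & HS & HU).
  destruct (HU B) as [HB|HB]; [exfalso|exact HB].
  destruct (Hcl B HB) as [q [r [Hq [Hr Hqr]]]].
  set (X := fun x => r (fun y => B (x ⋅ y))).
  assert (HX : ~ fin X) by (intro Hf; exact (proj2 Hq X Hf Hqr)).
  destruct (inf_nodup X HX (S n)) as [F0 [Hnd [Hl Hin]]].
  assert (Hfin : fin (inter_translates G (map inv F0) B)).
  { apply Hn. apply nodup_map_inj; auto. apply inv_inj. rewrite length_map; auto. }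
  apply (proj2 Hr _ Hfin).
  destruct (proj1 Hr) as (_ & _ & _ & HSr & _).
  apply HSr with (fun z => forall g, In g F0 -> B (g ⋅ z)).
  - apply (uf_list r (proj1 Hr) (fun g z => B (g ⋅ z))). intros g Hg. apply Hin; auto.
  - intros z Hz g Hg. apply in_map_iff in Hg. destruct Hg as [x [<- Hx]].
    unfold translate. rewrite inv_inv. auto.
Qed.

Lemma part4 (A : G -> Prop) : sparse G A -> ~ finitely_thin G A ->
  exists p, FT_wedge G p /\ ~ in_closure_GstarGstar G p.
Proof.
  intros Hsp HnA.
  set (Fam := fun C : G -> Prop => exists B, finitely_thin G B /\ forall z, A z -> ~ B z -> C z).
  destruct (@UFM.uf_exists G Fam) as [p [Hp Hfam]].
  - exists (fun _ => False). split; [apply FT_false | auto].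
  - intros [B [HB Hsub]]. apply HnA. destruct HB as [n Hn]. exists n.
    apply thin_mono with B; auto. intros z Az. apply NNPP; intro H. exact (Hsub z Az H).
  - intros C1 C2 [B1 [HB1 H1]] [B2 [HB2 H2]]. exists (fun y => B1 y \/ B2 y).
    split; [apply FT_union; auto|]. intros z Az Hn. split; [apply H1|apply H2]; auto.
  - intros C1 C2 [B [HB H]] Hs. exists B. split; auto.
  - exists p. split.
    + split; [exact Hp|]. intros B HB. apply Hfam. exists B. split; auto.
    + intros [_ Hcl].
      assert (HpA : p A) by (apply Hfam; exists (fun _ => False); split; [apply FT_false|auto]).
      destruct (Hcl A HpA) as [q [r [Hq [Hr Hqr]]]].
      set (X := fun x => r (fun y => A (x ⋅ y))).
      assert (HX : ~ fin X) by (intro Hf; exact (proj2 Hq X Hf Hqr)).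
      assert (HX' : ~ fin (fun g => X (inv g))).
      { intros [l Hl]. apply HX. exists (map inv l). intros x Hx. apply in_map_iff.
        exists (inv x). split; [apply inv_inv|]. apply Hl. rewrite inv_inv. exact Hx. }
      destruct (Hsp _ HX') as [F [HF Hfin]].
      apply (proj2 Hr _ Hfin).
      apply (uf_list r (proj1 Hr) (fun g z => A (inv g ⋅ z))). intros g Hg. exact (HF g Hg).
Qed.


Fixpoint pre (f : list G -> G) (bad : nat -> list G -> list G) (n : nat) : list G :=
  match n with
  | 0 => []
  | S n => pre f bad n ++ [f (bad n (pre f bad n))]
  end.

Lemma gen_seq (HG : infinite_group G) (bad : nat -> list G -> list G) :
  exists c : nat -> G, forall m, ~ In (c m) (bad m (map c (seq 0 m))).
Proof.
  assert (Hfr : forall l : list G, exists x, ~ In x l).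
  { intro l. apply NNPP; intro H. apply HG. exists l. intros x _. apply NNPP; intro H'.
    apply H; exists x; exact H'. }
  pose (f := fun l => proj1_sig (constructive_indefinite_description _ (Hfr l))).
  assert (Hf : forall l, ~ In (f l) l).
  { intro l. unfold f. destruct (constructive_indefinite_description _ _); simpl; auto. }
  pose (c := fun m => f (bad m (pre f bad m))).
  assert (Hp : forall m, pre f bad m = map c (seq 0 m)).
  { induction m as [|m IH]; [reflexivity|].
    rewrite seq_S, map_app. simpl. rewrite <- IH. reflexivity. }
  exists c. intro m. rewrite <- Hp. apply Hf.
Qed.

Definition D1 (l : list G) := flat_map (fun u => map (fun w => u ⋅ inv w) l) l.
Definition bad1 (m : nat) (l : list G) :=
  flat_map (fun e => flat_map (fun y => [e ⋅ y; inv e ⋅ y]) l) (D1 l).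

Lemma in_pre (x : nat -> G) i m : i < m -> In (x i) (map x (seq 0 m)).
Proof. intro H. apply in_map, in_seq. lia. Qed.

Lemma P1 (c : nat -> G) (Hc : forall m, ~ In (c m) (bad1 m (map c (seq 0 m)))) p q p' q' :
  p <> q -> c p ⋅ inv (c q) = c p' ⋅ inv (c q') -> max p q <= max p' q'.
Proof.
  intros Hpq He. destruct (le_lt_dec (max p q) (max p' q')) as [|Hlt]; [assumption|exfalso].
  remember (max p q) as m eqn:Hm.
  assert (HD : In (c p ⋅ inv (c q)) (D1 (map c (seq 0 m)))).
  { rewrite He. unfold D1. apply in_flat_map. exists (c p'). split; [apply in_pre; lia|].
    apply in_map_iff. exists (c q'); split; [reflexivity|apply in_pre; lia]. }
  destruct (Nat.max_spec p q) as [[H1 H2]|[H1 H2]]; rewrite H2 in Hm; subst m.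
  - apply (Hc q). unfold bad1. apply in_flat_map. exists (c p ⋅ inv (c q)). split; [exact HD|].
    apply in_flat_map. exists (c p). split; [apply in_pre; lia|]. simpl. right; left.
    rewrite inv_mul, inv_inv, mulKr'. reflexivity.
  - apply (Hc p). unfold bad1. apply in_flat_map. exists (c p ⋅ inv (c q)). split; [exact HD|].
    apply in_flat_map. exists (c q). split; [apply in_pre; lia|]. simpl. left.
    rewrite mulKr'. reflexivity.
Qed.

Lemma c_inj (c : nat -> G) (Hc : forall m, ~ In (c m) (bad1 m (map c (seq 0 m)))) i j :
  c i = c j -> i = j.
Proof.
  intro H. destruct (Nat.eq_dec i j) as [|Hne]; auto. exfalso.
  assert (Hm := P1 c Hc i j 0 0 Hne). rewrite H, !gmul_Vr in Hm.
  specialize (Hm eq_refl). lia.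
Qed.

Definition Sh (c : nat -> G) k := map c (seq k (S k)).

Lemma Sh_in c k s : In s (Sh c k) -> exists p, k <= p /\ s = c p.
Proof.
  intro H. apply in_map_iff in H. destruct H as [p [<- Hp]]. apply in_seq in Hp.
  exists p; split; [lia|auto].
Qed.

Definition kap (m : nat) := m - Nat.sqrt m * Nat.sqrt m.

Lemma kap_fiber k t : kap ((t + k) * (t + k) + k) = k.
Proof.
  unfold kap. rewrite (Nat.sqrt_unique _ (t + k)); [lia|]. nia.
Qed.

Definition ix (l : list G) i := nth i l e1.

Definition E2 c m l := flat_map (fun i => flat_map (fun s => flat_map (fun i' =>
   map (fun s' => (s' ⋅ ix l i') ⋅ inv (s ⋅ ix l i)) (Sh c (kap i'))) (seq 0 m))
   (Sh c (kap i))) (seq 0 m).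

Definition bad2 c m l := l ++ flat_map (fun e => flat_map (fun t' => flat_map (fun i =>
   flat_map (fun t => [inv t' ⋅ (e ⋅ (t ⋅ ix l i)); inv t' ⋅ (inv e ⋅ (t ⋅ ix l i))])
     (Sh c (kap i))) (seq 0 m)) (Sh c (kap m))) (E2 c m l).

Lemma ix_map (x : nat -> G) m i : i < m -> ix (map x (seq 0 m)) i = x i.
Proof.
  intro H. unfold ix. rewrite (nth_indep _ e1 (x 0)) by (rewrite length_map, length_seq; lia).
  rewrite map_nth, seq_nth by lia. reflexivity.
Qed.

Lemma P2 c (x : nat -> G) (Hx : forall m, ~ In (x m) (bad2 c m (map x (seq 0 m))))
  j j' i i' s s' t t' : i <> i' -> In s (Sh c (kap j)) -> In s' (Sh c (kap j')) ->
  In t (Sh c (kap i)) -> In t' (Sh c (kap i')) ->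
  (s' ⋅ x j') ⋅ inv (s ⋅ x j) = (t' ⋅ x i') ⋅ inv (t ⋅ x i) -> max i i' <= max j j'.
Proof.
  intros Hii Hs Hs' Ht Ht' He.
  destruct (le_lt_dec (max i i') (max j j')) as [|Hlt]; [assumption|exfalso].
  remember (max i i') as m eqn:Hm.
  set (l := map x (seq 0 m)).
  set (e := (s' ⋅ x j') ⋅ inv (s ⋅ x j)) in *.
  assert (HE : In e (E2 c m l)).
  { unfold E2. apply in_flat_map. exists j. split; [apply in_seq; lia|].
    apply in_flat_map. exists s. split; auto.
    apply in_flat_map. exists j'. split; [apply in_seq; lia|].
    apply in_map_iff. exists s'. split; auto. unfold l. rewrite !ix_map by lia. reflexivity. }
  destruct (Nat.max_spec i i') as [[H1 H2]|[H1 H2]]; rewrite H2 in Hm; subst m.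
  -
    apply (Hx i'). fold l. apply in_or_app. right.
    apply in_flat_map. exists e. split; auto.
    apply in_flat_map. exists t'. split; auto.
    apply in_flat_map. exists i. split; [apply in_seq; lia|].
    apply in_flat_map. exists t. split; auto. simpl. left.
    unfold l. rewrite ix_map by lia. rewrite He, mulKr', mulKl. reflexivity.
  - assert (i' < i) by lia.
    apply (Hx i). fold l. apply in_or_app. right.
    apply in_flat_map. exists e. split; auto.
    apply in_flat_map. exists t. split; auto.
    apply in_flat_map. exists i'. split; [apply in_seq; lia|].
    apply in_flat_map. exists t'. split; auto. simpl. right; left.
    unfold l. rewrite ix_map by lia. rewrite He, inv_mul, inv_inv, mulKr', mulKl. reflexivity.
Qed.

Lemma x_inj c (x : nat -> G) (Hx : forall m, ~ In (x m) (bad2 c m (map x (seq 0 m)))) i j :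
  x i = x j -> i = j.
Proof.
  intro H. destruct (lt_eq_lt_dec i j) as [[Hl|Hl]|Hl]; auto; exfalso.
  - apply (Hx j). apply in_or_app. left. rewrite <- H. apply in_pre; auto.
  - apply (Hx i). apply in_or_app. left. rewrite H. apply in_pre; auto.
Qed.


Lemma list_bound (P : G -> nat -> Prop) : (forall v M M', P v M -> M <= M' -> P v M') ->
  (forall v, exists M, P v M) -> forall F, exists M, forall v, In v F -> P v M.
Proof.
  intros Hm Hex F. induction F as [|a F [M IH]].
  - exists 0. intros v [].
  - destruct (Hex a) as [Ma Ha]. exists (max Ma M). intros v [<-|Hv].
    + apply Hm with Ma; auto; lia.
    + apply Hm with M; auto; lia.
Qed.

Lemma part2 (HG : infinite_group G) : exists A : G -> Prop, sparse G A /\ ~ finitely_thin G A.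
Proof.
  destruct (gen_seq HG bad1) as [c Hc].
  destruct (gen_seq HG (bad2 c)) as [x Hx].
  set (A0 := fun z => exists j s, In s (Sh c (kap j)) /\ z = s ⋅ x j).
  exists A0. split.
  -
    intros X HX.
    destruct (inf_nodup X HX 2) as [l2 [Hnd2 [Hlen2 Hin2]]].
    destruct l2 as [|ga [|gb [|]]]; simpl in Hlen2; try discriminate.
    assert (Hab : ga <> gb) by (inversion Hnd2; subst; intro; subst; simpl in *; tauto).
    set (d := inv gb ⋅ ga).
    assert (HK : exists K, forall p q, p <> q -> c p ⋅ inv (c q) = d -> max p q <= K).
    { destruct (classic (exists p' q', c p' ⋅ inv (c q') = d)) as [[p' [q' Hd]]|Hn].
      - exists (max p' q'). intros p q Hpq Hd'. apply (P1 c Hc); auto. congruence.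
      - exists 0. intros p q _ Hd. exfalso. apply Hn; eauto. }
    destruct HK as [K HK].
    destruct (inf_nodup X HX (S (S K))) as [L [HndL [HlenL HinL]]].
    set (F := ga :: gb :: L).
    set (CB := fun v M => forall j j' s s', In s (Sh c (kap j)) -> In s' (Sh c (kap j')) ->
           j <> j' -> (s' ⋅ x j') ⋅ inv (s ⋅ x j) = inv v ⋅ ga -> max j j' <= M).
    assert (HCB : forall v, exists M, CB v M).
    { intro v. destruct (classic (exists j0 j0' s0 s0', In s0 (Sh c (kap j0)) /\
          In s0' (Sh c (kap j0')) /\ (s0' ⋅ x j0') ⋅ inv (s0 ⋅ x j0) = inv v ⋅ ga))
        as [[j0 [j0' [s0 [s0' [H0 [H0' He0]]]]]]|Hn].
      - exists (max j0 j0'). intros j j' s s' Hs Hs' Hjj He.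
        apply (P2 c x Hx j0 j0' j j' s0 s0' s s'); auto. congruence.
      - exists 0. intros j j' s s' Hs Hs' Hjj He. exfalso. apply Hn.
        exists j, j', s, s'. auto. }
    destruct (list_bound CB) with (F := F) as [M HM]; auto.
    { intros v M0 M' H HM0 j j' s s' Hs Hs' Hjj He.
      specialize (H j j' s s' Hs Hs' Hjj He). lia. }
    exists F. split.
    { intros g [<-|[<-|Hg]]; [apply Hin2; simpl; auto | apply Hin2; simpl; auto | auto]. }
    apply fin_sub with (fun z => exists j, In j (seq 0 (S M)) /\
        (fun j z => exists s, In s (Sh c (kap j)) /\ z = ga ⋅ (s ⋅ x j)) j z).
    { apply fin_flat. intros j _. apply fin_map. }
    intros z Hz.
    destruct (Hz ga (or_introl eq_refl)) as [j [s [Hs Hzs]]].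
    destruct (classic (exists v, In v F /\ exists j' s', In s' (Sh c (kap j')) /\
                 inv v ⋅ z = s' ⋅ x j' /\ j' <> j))
      as [[v [HvF [j' [s' [Hs' [Hv Hjj]]]]]]|Hno].
    + exists j. split.
      * apply in_seq. assert (max j j' <= M); [|lia].
        apply (HM v HvF j j' s s'); auto.
        rewrite <- Hv, <- Hzs, inv_mul, inv_inv, mid. reflexivity.
      * exists s. split; auto. rewrite <- Hzs, mulKl'. reflexivity.
    + exfalso.
      assert (Hrep : forall v, In v F -> exists sv, In sv (Sh c (kap j)) /\ inv v ⋅ z = sv ⋅ x j).
      { intros v Hv. destruct (Hz v Hv) as [jv [sv [Hsv Hzv]]].
        destruct (Nat.eq_dec jv j) as [->|Hne].
        - exists sv; auto.
        - exfalso. apply Hno. exists v. split; auto. exists jv, sv. auto. }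
      destruct (Hrep gb (or_intror (or_introl eq_refl))) as [sb [Hsb Hzb]].
      assert (Hd : d = sb ⋅ inv s).
      { unfold d. rewrite <- (mid (inv gb) z ga), <- (inv_inv ga) at 1.
        rewrite <- inv_mul, Hzb, Hzs, mid2. reflexivity. }
      destruct (Sh_in _ _ _ Hs) as [p [Hp ->]].
      destruct (Sh_in _ _ _ Hsb) as [q [Hq ->]].
      assert (Hpq : q <> p).
      { intro; subst q. rewrite gmul_Vr in Hd. apply Hab. unfold d in Hd.
        rewrite <- (mulKl' gb ga), Hd, gmul_1r. reflexivity. }
      assert (HkK : kap j <= K) by (assert (Hmx := HK q p Hpq (eq_sym Hd)); lia).
      set (L' := map (fun v => (inv v ⋅ z) ⋅ inv (x j)) L).
      assert (HndL' : NoDup L').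
      { apply nodup_map_inj; auto. intros v w Hvw.
        apply mul_cancel_r, mul_cancel_r, inv_inj in Hvw. exact Hvw. }
      assert (Hincl : incl L' (Sh c (kap j))).
      { intros y Hy. apply in_map_iff in Hy. destruct Hy as [v [<- Hv]].
        destruct (Hrep v (or_intror (or_intror Hv))) as [sv [Hsv Hzv]].
        rewrite Hzv, mulKr. exact Hsv. }
      pose proof (NoDup_incl_length HndL' Hincl) as Hle.
      unfold L', Sh in Hle. rewrite !length_map, length_seq in Hle. lia.
  -
    intros [n Hn].
    assert (Hfin : fin (inter_translates G (map inv (Sh c n)) A0)).
    { apply Hn.
      - apply nodup_map_inj; [apply inv_inj|]. unfold Sh. apply nodup_map_inj.
        + apply (c_inj c Hc).
        + apply seq_NoDup.
      - unfold Sh. rewrite !length_map, length_seq. reflexivity. }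
    revert Hfin. apply nodup_inf. intro N.
    exists (map (fun t => x ((t + n) * (t + n) + n)) (seq 0 N)). repeat split.
    + apply nodup_map_inj; [|apply seq_NoDup]. intros t t' Ht.
      apply (x_inj c x Hx) in Ht. nia.
    + rewrite length_map, length_seq. reflexivity.
    + intros z Hz. apply in_map_iff in Hz. destruct Hz as [t [<- _]].
      intros g Hg. apply in_map_iff in Hg. destruct Hg as [s [<- Hs]].
      unfold translate. rewrite inv_inv. exists ((t + n) * (t + n) + n), s.
      rewrite kap_fiber. split; auto.
Qed.

End Main.

Theorem theorem6p6 (G : Group) (HG : infinite_group G) :
  ((forall A : G -> Prop, finitely_thin G A -> sparse G A) /\
   (exists A : G -> Prop, sparse G A /\ ~ finitely_thin G A)) /\
  ((forall p : (G -> Prop) -> Prop, in_closure_GstarGstar G p -> FT_wedge G p) /\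
   (exists p : (G -> Prop) -> Prop, FT_wedge G p /\ ~ in_closure_GstarGstar G p)).
Proof.
  destruct (part2 G HG) as [A [HAs HAn]].
  split; split.
  - apply part1.
  - exists A; auto.
  - apply part3.
  - apply (part4 G A HAs HAn).
Qed.
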